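(* For each natural number $n$, the asymptotic densities $\nu^{(n)}(\epsilon_0)=\lim_{m\to\infty}\#\{k:1\le k\le m,\ \xi_n(k)\text{ even}\}/m$ and $\nu^{(n)}(\epsilon_1)=\lim_{m\to\infty}\#\{k:1\le k\le m,\ \xi_n(k)\text{ odd}\}/m$ exist and $$\nu^{(n)}(\epsilon_0)=\frac{2}{3}+\frac{(-1)^{n+1}}{3\cdot 2^{n+1}},\qquad \nu^{(n)}(\epsilon_1)=\frac{1}{3}+\frac{(-1)^{n}}{3\cdot 2^{n+1}}.$$
   Context: $\mathbf{N}=\{1,2,3,\dots\}$. The Collatz map $\xi:\mathbf{N}\to\mathbf{N}$ is $\xi(\omega)=\omega/2$ if $\omega$ is even and $\xi(\omega)=3\omega+1$ if $\omega$ is odd; $\xi_n$ denotes its $n$-fold iterate, with $\xi_0$ the identity. *)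

(* Defs.v *)
From Stdlib Require Import Reals Arith List.
Import ListNotations.

Definition collatz (w : nat) : nat :=
  if Nat.even w then Nat.div2 w else 3 * w + 1.

Definition collatz_iter (n : nat) (w : nat) : nat := Nat.iter n collatz w.

Definition count_even (n m : nat) : nat :=
  length (filter (fun k => Nat.even (collatz_iter n k)) (seq 1 m)).
Definition count_odd (n m : nat) : nat :=
  length (filter (fun k => Nat.odd (collatz_iter n k)) (seq 1 m)).

(* Main.v *)
Require Import Defs.
From Stdlib Require Import Reals Arith List Lia Lra.

Lemma even_mod_even (x P : nat) : Nat.even P = true -> Nat.even (x mod P) = Nat.even x.
Proof.
  intros HP. destruct (Nat.eq_dec P 0) as [->|HP0]; [reflexivity|].
  rewrite (Nat.div_mod_eq x P) at 2. rewrite Nat.even_add, Nat.even_mul, HP.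
  simpl. destruct (Nat.even (x mod P)); reflexivity.
Qed.

Lemma even_pow2 a : 1 <= a -> Nat.even (2 ^ a) = true.
Proof. intros H. destruct a; [lia|]. rewrite Nat.pow_succ_r'. rewrite Nat.even_mul. reflexivity. Qed.

Lemma inv3 a : exists u q, 3 * u = 1 + q * 2 ^ a.
Proof.
  induction a as [|a [u [q H]]].
  - exists 1, 2. reflexivity.
  - rewrite Nat.pow_succ_r'. set (P := 2 ^ a) in *.
    destruct (Nat.Even_or_Odd q) as [[q' ->]|[q' ->]].
    + exists u, q'. nia.
    + exists (u + P), (q' + 2). nia.
Qed.

Lemma mod_lt_pos x P : P <> 0 -> x mod P < P.
Proof. intros; apply Nat.mod_upper_bound; auto. Qed.

Lemma L1 a w s : 1 <= a -> s < 2 ^ a ->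
  (collatz w mod 2 ^ a = s <->
   w mod 2 ^ (S a) = 2 * s \/ (Nat.odd w = true /\ (3 * w + 1) mod 2 ^ a = s)).
Proof.
  intros Ha Hs. rewrite Nat.pow_succ_r'. set (P := 2 ^ a) in *.
  assert (HP : P <> 0) by (subst P; apply Nat.pow_nonzero; lia).
  unfold collatz.
  destruct (Nat.Even_or_Odd w) as [[t ->]|[t ->]].
  - rewrite Nat.even_mul. simpl Nat.even. cbv iota.
    rewrite Nat.div2_double. rewrite Nat.Div0.mul_mod_distr_l.
    assert (Nat.odd (2 * t) = false) by (rewrite <- Nat.negb_even, Nat.even_mul; reflexivity).
    simpl orb; cbv iota. split; [lia|]. intros [H1|[H1 _]]; [lia|congruence].
  - assert (He : Nat.even (2 * t + 1) = false) by (rewrite Nat.even_add, Nat.even_mul; reflexivity).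
    rewrite He. assert (Ho: Nat.odd (2*t+1) = true) by (rewrite <- Nat.negb_even, He; reflexivity).
    split; [intros; right; auto|].
    intros [H1|[_ H1]]; [|exact H1].
    exfalso. assert (E := even_mod_even (2*t+1) (2*P)). rewrite Nat.even_mul in E.
    specialize (E eq_refl). rewrite H1, He, Nat.even_mul in E. discriminate.
Qed.

Lemma mod_double_split w P : P <> 0 ->
  w mod (P * 2) = w mod P \/ w mod (P * 2) = w mod P + P.
Proof.
  intros HP. rewrite Nat.Div0.mod_mul_r.
  assert (H := Nat.mod_upper_bound (w / P) 2 ltac:(lia)).
  destruct ((w / P) mod 2) as [|[|]]; lia.
Qed.

Lemma cancel_u x y u P : P <> 0 -> (x + u) mod P = (y + u) mod P -> x mod P = y mod P.
Proof.
  intros HP H.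
  assert (Hx : (x + u + (P - 1) * u) mod P = x mod P).
  { replace (x + u + (P - 1) * u) with (x + u * P) by nia. apply Nat.Div0.mod_add. }
  assert (Hy : (y + u + (P - 1) * u) mod P = y mod P).
  { replace (y + u + (P - 1) * u) with (y + u * P) by nia. apply Nat.Div0.mod_add. }
  rewrite <- Hx, <- Hy. rewrite <- (Nat.Div0.add_mod_idemp_l (x+u)), <- (Nat.Div0.add_mod_idemp_l (y+u)).
  rewrite H. reflexivity.
Qed.

Lemma L2 a w r1 s : 1 <= a -> r1 < 2 ^ a -> Nat.odd r1 = true -> (3 * r1 + 1) mod 2 ^ a = s ->
  ((Nat.odd w = true /\ (3 * w + 1) mod 2 ^ a = s) <->
   (w mod 2 ^ (S a) = r1 \/ w mod 2 ^ (S a) = r1 + 2 ^ a)).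
Proof.
  intros Ha Hr Hodd Hs. assert (Hev := even_pow2 a Ha).
  rewrite Nat.pow_succ_r', (Nat.mul_comm 2). set (P := 2 ^ a) in *.
  assert (HP : P <> 0) by (subst P; apply Nat.pow_nonzero; lia).
  assert (Key : (3 * w + 1) mod P = s <-> w mod P = r1).
  { split.
    - intros H. destruct (inv3 a) as [u [q Hu]]. fold P in Hu.
      assert (H2 : (u * (3 * w + 1)) mod P = (u * (3 * r1 + 1)) mod P).
      { rewrite (Nat.Div0.mul_mod u (3*w+1)), (Nat.Div0.mul_mod u (3*r1+1)), H, Hs. reflexivity. }
      replace (u * (3 * w + 1)) with (w + u + (q * w) * P) in H2 by nia.
      replace (u * (3 * r1 + 1)) with (r1 + u + (q * r1) * P) in H2 by nia.
      rewrite !Nat.Div0.mod_add in H2. apply cancel_u in H2; auto.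
      rewrite H2. apply Nat.mod_small; auto.
    - intros H. rewrite <- Hs. rewrite Nat.Div0.add_mod, (Nat.Div0.add_mod (3*r1)).
      rewrite (Nat.Div0.mul_mod 3 w), (Nat.Div0.mul_mod 3 r1), H, (Nat.mod_small r1); auto. }
  rewrite Key. assert (Hm := mod_lt_pos w P HP).
  destruct (mod_double_split w P HP) as [E|E]; rewrite E.
  - split.
    + intros [_ H]; lia.
    + intros H. assert (w mod P = r1) by lia. split; auto.
      rewrite <- Nat.negb_even, <- (even_mod_even w P Hev), H0, Nat.negb_even; auto.
  - split.
    + intros [_ H]; lia.
    + intros H. assert (w mod P = r1) by lia. split; auto.
      rewrite <- Nat.negb_even, <- (even_mod_even w P Hev), H0, Nat.negb_even; auto.
Qed.

Lemma L3 a s : 1 <= a -> s < 2 ^ a -> Nat.even s = true ->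
  exists r1, r1 < 2 ^ a /\ Nat.odd r1 = true /\ (3 * r1 + 1) mod 2 ^ a = s.
Proof.
  intros Ha Hs He. assert (Hev := even_pow2 a Ha). set (P := 2 ^ a) in *.
  assert (HP : P <> 0) by (subst P; apply Nat.pow_nonzero; lia).
  destruct (inv3 a) as [u [q Hu]]. fold P in Hu.
  assert (Hr : (3 * ((u * (s + P - 1)) mod P) + 1) mod P = s).
  { rewrite Nat.Div0.add_mod, Nat.Div0.mul_mod, Nat.Div0.mod_mod, <- Nat.Div0.mul_mod,
      <- Nat.Div0.add_mod.
    replace (3 * (u * (s + P - 1)) + 1) with (s + (1 + q * (s + P - 1)) * P) by nia.
    rewrite Nat.Div0.mod_add. apply Nat.mod_small; auto. }
  exists ((u * (s + P - 1)) mod P). split; [apply mod_lt_pos; auto|]. split; [|exact Hr].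
  set (r := (u * (s + P - 1)) mod P) in *.
  assert (E := even_mod_even (3 * r + 1) P Hev). rewrite Hr, He in E.
  rewrite Nat.even_add, Nat.even_mul in E. simpl in E.
  rewrite <- Nat.negb_even. destruct (Nat.even r); simpl in *; congruence.
Qed.

Lemma L4 a s w : 1 <= a -> Nat.even s = false ->
  ~ (Nat.odd w = true /\ (3 * w + 1) mod 2 ^ a = s).
Proof.
  intros Ha Hs [Hw H]. assert (Hev := even_pow2 a Ha).
  assert (E := even_mod_even (3 * w + 1) _ Hev). rewrite H, Hs in E.
  rewrite Nat.even_add, Nat.even_mul in E. rewrite <- Nat.negb_even in Hw.
  destruct (Nat.even w); simpl in *; congruence.
Qed.
Open Scope R_scope.

Definition cnt (P : nat -> bool) (l : list nat) : nat := length (filter P l).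
Definition dens (P : nat -> bool) (d : R) :=
  Un_cv (fun m => INR (cnt P (seq 1 m)) / INR m) d.

Lemma Un_cv_ext (u v : nat -> R) l : (forall m, u m = v m) -> Un_cv u l -> Un_cv v l.
Proof. intros E H eps He. destruct (H eps He) as [N HN]. exists N. intros n Hn. rewrite <- E. auto. Qed.

Lemma dens_ext P Q d : (forall k, P k = Q k) -> dens P d -> dens Q d.
Proof.
  intros E. apply Un_cv_ext. intros m. unfold cnt. rewrite (filter_ext P Q E). reflexivity.
Qed.

Lemma cnt_or P Q l : (forall k, (P k && Q k)%bool = false) ->
  cnt (fun k => (P k || Q k)%bool) l = (cnt P l + cnt Q l)%nat.
Proof.
  intros D. unfold cnt. induction l as [|x l IH]; simpl; auto.
  specialize (D x). destruct (P x), (Q x); simpl in *; try discriminate; rewrite IH; lia.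
Qed.

Lemma dens_or P Q d1 d2 : (forall k, (P k && Q k)%bool = false) ->
  dens P d1 -> dens Q d2 -> dens (fun k => (P k || Q k)%bool) (d1 + d2).
Proof.
  intros D H1 H2. eapply Un_cv_ext; [|apply (CV_plus _ _ _ _ H1 H2)].
  intros m. simpl. rewrite cnt_or by auto. rewrite plus_INR, Rdiv_plus_distr. reflexivity.
Qed.

Section Per.
Variable P : nat -> bool.
Variable p : nat.
Hypothesis Hp : (0 < p)%nat.
Hypothesis Hper : forall k, P (k + p)%nat = P k.

Lemma shift1 len s : cnt P (seq (s + p) len) = cnt P (seq s len).
Proof.
  revert s; induction len as [|len IH]; intros s; [reflexivity|].
  unfold cnt in *; simpl. rewrite Hper. pose proof (IH (S s)) as H. simpl in H.
  destruct (P s); simpl; rewrite H; reflexivity.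
Qed.

Lemma shiftq q len s : cnt P (seq (s + q * p) len) = cnt P (seq s len).
Proof.
  induction q as [|q IH]; [rewrite Nat.add_0_r; reflexivity|].
  replace (s + S q * p)%nat with (s + q * p + p)%nat by lia. rewrite shift1. exact IH.
Qed.

Lemma cnt_app s a b : cnt P (seq s (a + b)) = (cnt P (seq s a) + cnt P (seq (s + a) b))%nat.
Proof. unfold cnt. rewrite seq_app, filter_app, length_app. reflexivity. Qed.

Lemma cnt_mult q : cnt P (seq 0 (q * p)) = (q * cnt P (seq 0 p))%nat.
Proof.
  induction q as [|q IH]; [reflexivity|].
  replace (S q * p)%nat with (q * p + p)%nat by lia. rewrite cnt_app, IH.
  replace (0 + q * p)%nat with (0 + q * p)%nat by lia. rewrite shiftq. simpl. lia.
Qed.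

Lemma cnt_mono s a b : (a <= b)%nat -> (cnt P (seq s a) <= cnt P (seq s b))%nat.
Proof. intros H. replace b with (a + (b - a))%nat by lia. rewrite cnt_app. lia. Qed.

Lemma cnt_S m : (cnt P (seq 1 m) <= cnt P (seq 0 (S m)) <= cnt P (seq 1 m) + 1)%nat.
Proof. unfold cnt. simpl. destruct (P 0%nat); simpl; lia. Qed.

Lemma nat_bounds m : let c := cnt P (seq 0 p) in let x := cnt P (seq 1 m) in
  (x * p <= c * m + c * p /\ c * m <= x * p + (c + 1) * p)%nat.
Proof.
  cbv zeta. set (q := (m / p)%nat).
  assert (Hm : (q * p <= m < q * p + p)%nat).
  { subst q. pose proof (Nat.div_mod_eq m p). pose proof (Nat.mod_upper_bound m p ltac:(lia)). nia. }
  assert (H1 : (cnt P (seq 1 m) <= S q * cnt P (seq 0 p))%nat).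
  { rewrite <- cnt_mult. pose proof (cnt_S m). pose proof (cnt_mono 0 (S m) (S q * p) ltac:(lia)). lia. }
  assert (H2 : (q * cnt P (seq 0 p) <= cnt P (seq 1 m) + 1)%nat).
  { rewrite <- cnt_mult. pose proof (cnt_S m). pose proof (cnt_mono 0 (q * p) (S m) ltac:(lia)). lia. }
  split; nia.
Qed.

Lemma dens_per : dens P (INR (cnt P (seq 0 p)) / INR p).
Proof.
  set (c := cnt P (seq 0 p)).
  intros eps He.
  assert (Hc : 0 < INR c + 1) by (pose proof (pos_INR c); lra).
  destruct (archimed_cor1 (eps / (INR c + 1))) as [N [HN HN0]].
  { apply Rdiv_lt_0_compat; lra. }
  exists N. intros m Hm. unfold R_dist.
  pose proof (nat_bounds m) as [B1 B2]. fold c in B1, B2.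
  set (x := cnt P (seq 1 m)) in *.
  apply le_INR in B1, B2. rewrite !plus_INR, !mult_INR in B1, B2. simpl in B2.
  assert (HpR : 0 < INR p) by (apply lt_0_INR; lia).
  assert (HNR : 0 < INR N) by (apply lt_0_INR; lia).
  assert (HmN : INR N <= INR m) by (apply le_INR; lia).
  assert (HmR : 0 < INR m) by lra.
  assert (Hb : (INR c + 1) / INR m < eps).
  { apply Rle_lt_trans with ((INR c + 1) / INR N).
    - unfold Rdiv. apply Rmult_le_compat_l; [lra|]. apply Rinv_le_contravar; lra.
    - apply Rmult_lt_reg_r with (/ (INR c + 1)); [apply Rinv_0_lt_compat; lra|].
      replace ((INR c + 1) / INR N * / (INR c + 1)) with (/ INR N) by (field; lra).
      exact HN. }
  assert (E : INR x / INR m - INR c / INR p = (INR x * INR p - INR c * INR m) / (INR m * INR p))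
    by (field; lra).
  rewrite E. apply Rabs_def1.
  - apply Rle_lt_trans with ((INR c + 1) / INR m); [|exact Hb].
    apply Rmult_le_reg_r with (INR m * INR p); [nra|].
    replace ((INR x * INR p - INR c * INR m) / (INR m * INR p) * (INR m * INR p))
      with (INR x * INR p - INR c * INR m) by (field; lra).
    replace ((INR c + 1) / INR m * (INR m * INR p)) with ((INR c + 1) * INR p) by (field; lra).
    lra.
  - apply Rlt_le_trans with (- ((INR c + 1) / INR m)); [lra|].
    apply Rmult_le_reg_r with (INR m * INR p); [nra|].
    replace ((INR x * INR p - INR c * INR m) / (INR m * INR p) * (INR m * INR p))
      with (INR x * INR p - INR c * INR m) by (field; lra).
    replace (- ((INR c + 1) / INR m) * (INR m * INR p)) with (- ((INR c + 1) * INR p)) by (field; lra).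
    rewrite plus_INR in B2. change (INR 1) with 1 in B2. lra.
Qed.
End Per.

Lemma cnt_mod_small p r l : (l <= p)%nat -> (r < p)%nat ->
  cnt (fun k => (k mod p =? r)%nat) (seq 0 l) = if (r <? l)%nat then 1%nat else 0%nat.
Proof.
  intros Hl Hr. induction l as [|l IH]; [reflexivity|].
  unfold cnt in *. rewrite seq_S, filter_app, length_app, IH by lia. simpl.
  rewrite Nat.mod_small by lia.
  destruct (Nat.ltb_spec r l), (Nat.ltb_spec r (S l)), (Nat.eqb_spec l r); simpl; lia.
Qed.

Definition beta (n : nat) : R := 2/3 + (-1)^n/(3*2^n).
Definition alpha (n : nat) : R := 2 - beta n.
Definition D (n r : nat) : R := if Nat.even r then alpha n else beta n.

Lemma dens_eq P d d' : dens P d -> d = d' -> dens P d'.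
Proof. intros H ->; exact H. Qed.

Lemma iterS n k : collatz_iter (S n) k = collatz (collatz_iter n k).
Proof. reflexivity. Qed.

Lemma odd_ex r : Nat.odd r = true -> exists t, r = (2 * t + 1)%nat.
Proof. intros H. apply Nat.odd_spec in H. destruct H as [t Ht]. exists t. lia. Qed.

Lemma pow2S a : (1 <= a)%nat -> exists b, (2 ^ a = 2 * b)%nat.
Proof. intros H. destruct a; [lia|]. exists (2^a)%nat. apply Nat.pow_succ_r'. Qed.

Lemma main n : forall a r, (1 <= a)%nat -> (r < 2 ^ a)%nat ->
  dens (fun k => (collatz_iter n k mod 2 ^ a =? r)%nat) (D n r / 2 ^ a).
Proof.
  induction n as [|n IH]; intros a s Ha Hs.
  - assert (Hp : (0 < 2 ^ a)%nat) by (apply Nat.neq_0_lt_0, Nat.pow_nonzero; lia).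
    eapply dens_eq.
    + apply (dens_per (fun k => (k mod 2 ^ a =? s)%nat) (2 ^ a) Hp).
      intros k. replace (k + 2 ^ a)%nat with (k + 1 * 2 ^ a)%nat by lia.
      rewrite Nat.Div0.mod_add. reflexivity.
    + rewrite cnt_mod_small by lia. rewrite (proj2 (Nat.ltb_lt _ _) Hs).
      rewrite pow_INR. unfold D, alpha, beta. simpl.
      destruct (Nat.even s); replace (1+1) with 2 by ring; field; apply pow_nonzero; lra.
  - assert (HP2 : (2 ^ S a = 2 * 2 ^ a)%nat) by apply Nat.pow_succ_r'.
    destruct (pow2S a Ha) as [b Hb].
    destruct (Nat.even s) eqn:Es.
    + destruct (L3 a s Ha Hs Es) as [r1 [Hr1 [Hr1o Hr1e]]].
      assert (EQ : forall k, (collatz_iter (S n) k mod 2 ^ a =? s)%nat =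
        ((collatz_iter n k mod 2 ^ S a =? 2 * s) || ((collatz_iter n k mod 2 ^ S a =? r1) ||
          (collatz_iter n k mod 2 ^ S a =? r1 + 2 ^ a)))%nat%bool).
      { intros k. rewrite iterS. apply Bool.eq_iff_eq_true.
        rewrite !Bool.orb_true_iff, !Nat.eqb_eq, (L1 a (collatz_iter n k) s Ha Hs).
        rewrite (L2 a (collatz_iter n k) r1 s Ha Hr1 Hr1o Hr1e). tauto. }
      destruct (odd_ex r1 Hr1o) as [t Ht].
      apply Nat.even_spec in Es. destruct Es as [s' Hs'].
      apply (dens_ext (fun k => ((collatz_iter n k mod 2 ^ S a =? 2 * s) || ((collatz_iter n k mod 2 ^ S a =? r1) ||
          (collatz_iter n k mod 2 ^ S a =? r1 + 2 ^ a)))%nat%bool)); [intros k; symmetry; apply EQ|].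
      eapply dens_eq; [apply dens_or; [|apply (IH (S a) (2 * s)%nat)|apply dens_or]|].
      * intros k. destruct (Nat.eqb_spec (collatz_iter n k mod 2 ^ S a) (2 * s)),
          (Nat.eqb_spec (collatz_iter n k mod 2 ^ S a) r1),
          (Nat.eqb_spec (collatz_iter n k mod 2 ^ S a) (r1 + 2 ^ a)); simpl; auto; lia.
      * lia.
      * lia.
      * intros k. destruct (Nat.eqb_spec (collatz_iter n k mod 2 ^ S a) r1),
          (Nat.eqb_spec (collatz_iter n k mod 2 ^ S a) (r1 + 2 ^ a)); simpl; auto; lia.
      * apply (IH (S a) r1); lia.
      * apply (IH (S a) (r1 + 2 ^ a)%nat); lia.
      * unfold D. replace (Nat.even (2 * s)) with true by (rewrite Nat.even_mul; reflexivity).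
        replace (Nat.even r1) with false by (rewrite Ht, Nat.even_add, Nat.even_mul; reflexivity).
        replace (Nat.even (r1 + 2 ^ a)) with false
          by (rewrite Nat.even_add, Hb, Ht, Nat.even_add, !Nat.even_mul; reflexivity).
        replace (Nat.even s) with true by (rewrite Hs', Nat.even_mul; reflexivity).
        unfold alpha, beta. simpl. field. split; apply pow_nonzero; lra.
    + apply (dens_ext (fun k => (collatz_iter n k mod 2 ^ S a =? 2 * s)%nat)).
      { intros k. rewrite iterS. symmetry. apply Bool.eq_iff_eq_true.
        rewrite !Nat.eqb_eq, (L1 a (collatz_iter n k) s Ha Hs).
        pose proof (L4 a s (collatz_iter n k) Ha Es). tauto. }
      eapply dens_eq; [apply (IH (S a) (2 * s)%nat); lia|].
      unfold D. replace (Nat.even (2 * s)) with true by (rewrite Nat.even_mul; reflexivity).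
      rewrite Es. unfold alpha, beta. simpl. field. split; apply pow_nonzero; lra.
Qed.

Lemma even_eqb x : Nat.even x = (x mod 2 ^ 1 =? 0)%nat.
Proof.
  destruct (Nat.Even_or_Odd x) as [[t ->]|[t ->]].
  - rewrite Nat.even_mul. replace (2 * t)%nat with (0 + t * 2 ^ 1)%nat by (simpl; lia).
    rewrite Nat.Div0.mod_add. reflexivity.
  - rewrite Nat.even_add, Nat.even_mul. replace (2 * t + 1)%nat with (1 + t * 2 ^ 1)%nat by (simpl; lia).
    rewrite Nat.Div0.mod_add. reflexivity.
Qed.

Lemma odd_eqb x : Nat.odd x = (x mod 2 ^ 1 =? 1)%nat.
Proof.
  destruct (Nat.Even_or_Odd x) as [[t ->]|[t ->]].
  - rewrite <- Nat.negb_even, Nat.even_mul. replace (2 * t)%nat with (0 + t * 2 ^ 1)%nat by (simpl; lia).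
    rewrite Nat.Div0.mod_add. reflexivity.
  - rewrite <- Nat.negb_even, Nat.even_add, Nat.even_mul. replace (2 * t + 1)%nat with (1 + t * 2 ^ 1)%nat by (simpl; lia).
    rewrite Nat.Div0.mod_add. reflexivity.
Qed.

Theorem theorem3p1 (n : nat) (hn : (1 <= n)%nat) :
  Un_cv (fun m => INR (count_even n m) / INR m)
        (2 / 3 + (-1) ^ (n + 1) / (3 * 2 ^ (n + 1)))
  /\
  Un_cv (fun m => INR (count_odd n m) / INR m)
        (1 / 3 + (-1) ^ n / (3 * 2 ^ (n + 1))).
Proof.
  split.
  - pose proof (main n 1 0 (le_n 1) ltac:(simpl; lia)) as H.
    eapply dens_ext in H; [|intros k; symmetry; apply even_eqb].
    unfold dens in H. unfold count_even.
    replace (2 / 3 + (-1) ^ (n + 1) / (3 * 2 ^ (n + 1))) with (D n 0 / 2 ^ 1); [exact H|].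
    unfold D, alpha, beta. simpl Nat.even. rewrite !pow_add. simpl. field. apply pow_nonzero; lra.
  - pose proof (main n 1 1 (le_n 1) ltac:(simpl; lia)) as H.
    eapply dens_ext in H; [|intros k; symmetry; apply odd_eqb].
    unfold dens in H. unfold count_odd.
    replace (1 / 3 + (-1) ^ n / (3 * 2 ^ (n + 1))) with (D n 1 / 2 ^ 1); [exact H|].
    unfold D, alpha, beta. simpl Nat.even. rewrite !pow_add. simpl. field. apply pow_nonzero; lra.
Qed.
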